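(* Given integers $t,q\geqslant1$, there is a constant $C>0$ such that \[\frac{\sigma(n)}{n\log\log n}\geqslant C\] for infinitely many positive integers $n$ with $n\equiv t\pmod q$.
   Context: $\sigma(n)$ denotes the sum of the positive divisors of $n$. *)

(* Defs.v *)
From Stdlib Require Import Reals Arith List.
Open Scope R_scope.

(* sigma_div n = sum of the positive divisors of n (sigma 0 = 0, irrelevant). *)
Definition sigma_div (n : nat) : nat :=
  fold_right Nat.add 0%nat
    (filter (fun d => Nat.eqb (n mod d) 0) (seq 1 n)).

(* Main.v *)
Require Import Defs.
From Stdlib Require Import Reals Arith List Lia Lra.
Open Scope R_scope.

Definition sumn (l : list nat) : nat := fold_right Nat.add 0%nat l.

Lemma sumn_init l i : fold_right Nat.add i l = (i + sumn l)%nat.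
Proof. induction l; simpl; [lia|]. unfold sumn in *. simpl. rewrite IHl. lia. Qed.

Lemma sumn_app l1 l2 : sumn (l1 ++ l2) = (sumn l1 + sumn l2)%nat.
Proof. unfold sumn. rewrite fold_right_app, sumn_init. unfold sumn. lia. Qed.

Fixpoint desc (l : list nat) : Prop :=
  match l with nil => True | x :: l' => Forall (fun y => y < x)%nat l' /\ desc l' end.

Lemma subsum (p : nat -> bool) : forall k a l, desc l ->
  Forall (fun x => a <= x < a + k /\ p x = true)%nat l ->
  (sumn l <= sumn (filter p (seq a k)))%nat.
Proof.
  induction k as [|k IH]; intros a l Hd Hf.
  - destruct l as [|x l]; simpl; [lia|]. inversion Hf; subst. lia.
  - rewrite seq_S, filter_app, sumn_app.
    destruct l as [|x l]; [simpl; lia|].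
    destruct Hd as [Hlt Hd]. inversion Hf as [|? ? [Hx Hp] Hf']; subst.
    destruct (Nat.eq_dec x (a + k)) as [E|E].
    + subst x. simpl. rewrite Hp. simpl.
      assert (sumn l <= sumn (filter p (seq a k)))%nat.
      { apply IH; auto. rewrite Forall_forall in *. intros y Hy.
        specialize (Hlt y Hy). specialize (Hf' y Hy). split; [lia|tauto]. }
      simpl. unfold sumn in *; simpl in *. lia.
    + assert (sumn (x :: l) <= sumn (filter p (seq a k)))%nat.
      { apply IH. simpl; auto. constructor. split; [lia|auto].
        rewrite Forall_forall in *. intros y Hy.
        specialize (Hlt y Hy). specialize (Hf' y Hy). split; [lia|tauto]. }
      lia.
Qed.

Lemma desc_map (f : nat -> nat) : forall m s,
  (forall i j, s <= i -> i < j -> j < s + m -> f j < f i)%nat ->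
  desc (map f (seq s m)).
Proof.
  induction m as [|m IH]; intros s H; simpl; auto. split.
  - rewrite Forall_forall. intros y Hy. apply in_map_iff in Hy.
    destruct Hy as [j [<- Hj]]. apply in_seq in Hj. apply H; lia.
  - apply IH. intros; apply H; lia.
Qed.

Fixpoint P (q J : nat) : nat := match J with O => 1%nat | S J => (P q J * (1 + q * J))%nat end.

Lemma P_mod q J : (1 <= q)%nat -> (P q J mod q = 1 mod q)%nat.
Proof.
  intro hq. induction J; simpl; auto.
  rewrite Nat.Div0.mul_mod, IHJ, (Nat.Div0.add_mod 1 (q*J)), (Nat.mul_comm q J), Nat.Div0.mod_mul, Nat.add_0_r, Nat.Div0.mod_mod, <- Nat.Div0.mul_mod. auto.
Qed.

Lemma P_div q J j : (j < J)%nat -> Nat.divide (1 + q * j) (P q J).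
Proof.
  induction J; intros H; [lia|]. simpl.
  destruct (Nat.eq_dec j J).
  - subst. apply Nat.divide_factor_r.
  - apply Nat.divide_mul_l. apply IHJ. lia.
Qed.

Lemma P_pos q J : (1 <= P q J)%nat.
Proof. induction J; simpl; nia. Qed.

Lemma P_le q J : forall J', (J' <= J)%nat -> (1 <= q)%nat -> (P q J' <= (q * J) ^ J')%nat.
Proof.
  induction J'; intros H hq; simpl; [lia|].
  specialize (IHJ' ltac:(lia) hq).
  rewrite Nat.mul_comm. apply Nat.mul_le_mono; [nia|auto].
Qed.

Lemma P_ge q J : (1 <= q)%nat -> (J <= P q J)%nat.
Proof.
  intro hq. induction J; simpl; [lia|].
  destruct J. simpl. lia. nia.
Qed.

Lemma ln_le_xm1 y : 0 < y -> ln y <= y - 1.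
Proof.
  intro Hy. destruct (Rle_or_lt (ln y) (y - 1)) as [h|h]; auto.
  apply exp_increasing in h. rewrite exp_ln in h by auto.
  pose proof (exp_ineq1_le (y - 1)). lra.
Qed.

Lemma sigma_ge n l : (1 <= n)%nat -> desc l ->
  Forall (fun x => 1 <= x <= n /\ n mod x = 0)%nat l ->
  (sumn l <= fold_right Nat.add 0 (filter (fun d => Nat.eqb (n mod d) 0) (seq 1 n)))%nat.
Proof.
  intros Hn Hd Hf. apply (subsum _ n 1 l Hd).
  rewrite Forall_forall in *. intros x Hx. specialize (Hf x Hx).
  split; [lia|]. apply Nat.eqb_eq. tauto.
Qed.

Lemma step_ineq (c d q J : R) : 1 <= q -> 0 <= J -> 0 <= c -> 1 <= d -> d <= q * (J + 1) ->
  c * d / q * (ln (J + 1 + 1) - ln (J + 1)) <= c.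
Proof.
  intros hq hJ hc hd hdq.
  assert (Hl : ln (J + 1 + 1) - ln (J + 1) <= / (J + 1)).
  { assert (E: J + 1 + 1 = (J + 1) * ((J + 1 + 1) / (J + 1))) by (field; lra).
    rewrite E at 1. rewrite ln_mult by (try apply Rdiv_lt_0_compat; lra).
    pose proof (ln_le_xm1 ((J + 1 + 1) / (J + 1)) ltac:(apply Rdiv_lt_0_compat; lra)).
    replace ((J + 1 + 1) / (J + 1) - 1) with (/ (J + 1)) in H by (field; lra). lra. }
  assert (0 <= ln (J + 1 + 1) - ln (J + 1)).
  { assert (ln (J+1) < ln (J+1+1)) by (apply ln_increasing; lra). lra. }
  apply Rle_trans with (c * d / q * / (J + 1)).
  - apply Rmult_le_compat_l; auto. apply Rmult_le_pos; [apply Rmult_le_pos; lra|].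
    left; apply Rinv_0_lt_compat; lra.
  - unfold Rdiv. rewrite Rmult_assoc, Rmult_assoc.
    rewrite <- Rmult_1_r. apply Rmult_le_compat_l; auto.
    rewrite <- Rinv_mult. apply Rmult_le_reg_r with (q * (J + 1)). nra.
    rewrite Rmult_assoc, Rinv_l by nra. lra.
Qed.

Lemma harm n q : (1 <= q)%nat -> forall J, (forall j, (j < J)%nat -> Nat.divide (1 + q * j) n) ->
  INR n / INR q * ln (INR J + 1) <= INR (sumn (map (fun j => n / (1 + q * j)) (seq 0 J)))%nat.
Proof.
  intros hq J. induction J as [|J IH]; intros Hd.
  - simpl. rewrite Rplus_0_l, ln_1. lra.
  - rewrite seq_S, map_app, sumn_app, plus_INR. 
    specialize (IH ltac:(intros; apply Hd; lia)).
    destruct (Hd J ltac:(lia)) as [c Hc].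
    assert (Hcd : (n / (1 + q * J) = c)%nat) by (rewrite Hc; apply Nat.div_mul; lia).
    assert (E1 : forall x, sumn (map (fun j => n / (1 + q * j)) (x :: nil))%nat = (n / (1 + q * x))%nat).
    { intro x. unfold sumn, map, fold_right. lia. }
    rewrite E1, Nat.add_0_l, Hcd.
    rewrite S_INR.
    assert (step : INR n / INR q * (ln (INR J + 1 + 1) - ln (INR J + 1)) <= INR c).
    { rewrite Hc, mult_INR. apply step_ineq.
      - apply (le_INR 1); lia.
      - apply pos_INR.
      - apply pos_INR.
      - apply (le_INR 1); lia.
      - rewrite <- S_INR, <- mult_INR. apply le_INR. lia. }
    lra.
Qed.

Lemma ln_le_mono x y : 0 < x -> x <= y -> ln x <= ln y.
Proof. intros hx [h|h]. left; apply ln_increasing; auto. subst; lra. Qed.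

Theorem lemma5p7 (t q : nat) (ht : (1 <= t)%nat) (hq : (1 <= q)%nat) :
  exists C : R, 0 < C /\
    forall N : nat, exists n : nat,
      (N < n)%nat /\ Nat.modulo n q = Nat.modulo t q /\
      INR (Defs.sigma_div n) / (INR n * ln (ln (INR n))) >= C.
Proof.
  assert (Hq : 1 <= INR q) by (apply (le_INR 1); lia).
  exists (1 / (3 * INR q)). split. { apply Rdiv_lt_0_compat; lra. }
  intro N. set (J := (N + t + q + 4)%nat).
  set (n := (t * P q J)%nat). exists n.
  pose proof (P_ge q J hq) as HPJ. pose proof (P_pos q J) as HP1.
  assert (HnJ : (J <= n)%nat) by (unfold n; nia).
  assert (HJ4n : (4 <= J)%nat) by (unfold J; lia).
  split; [unfold J in *; lia|]. split.
  { unfold n. rewrite Nat.Div0.mul_mod, P_mod by auto. rewrite <- Nat.Div0.mul_mod, Nat.mul_1_r. auto. }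
  set (f := fun j => (n / (1 + q * j))%nat).
  assert (Hdiv : forall j, (j < J)%nat -> Nat.divide (1 + q * j) n).
  { intros j hj. unfold n. apply Nat.divide_mul_r. apply P_div; auto. }
  assert (Hsig : (sumn (map f (seq 0 J)) <= sigma_div n)%nat).
  { unfold sigma_div. apply sigma_ge; [lia| |].
    - apply desc_map. intros i j _ hij hj. unfold f.
      destruct (Hdiv i ltac:(lia)) as [a Ha]. destruct (Hdiv j ltac:(lia)) as [b Hb].
      assert (E1 : (n / (1 + q * i) = a)%nat) by (rewrite Ha; apply Nat.div_mul; lia).
      assert (E2 : (n / (1 + q * j) = b)%nat) by (rewrite Hb; apply Nat.div_mul; lia).
      rewrite E1, E2. assert (1 + q * i < 1 + q * j)%nat by nia. assert (0 < b)%nat by nia. nia.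
    - rewrite Forall_forall. intros x Hx. apply in_map_iff in Hx.
      destruct Hx as [j [<- Hj]]. apply in_seq in Hj. unfold f.
      destruct (Hdiv j ltac:(lia)) as [b Hb].
      assert (E2 : (n / (1 + q * j) = b)%nat) by (rewrite Hb; apply Nat.div_mul; lia).
      rewrite E2. split; [nia|]. rewrite Hb, Nat.mul_comm. apply Nat.Div0.mod_mul. }
  pose proof (harm n q hq J Hdiv) as Hh. fold f in Hh.
  apply le_INR in Hsig.
  assert (HnB : (n <= J * (J * J) ^ J)%nat).
  { unfold n. apply Nat.mul_le_mono; [unfold J; lia|].
    eapply Nat.le_trans. apply (P_le q J J); auto.
    apply Nat.pow_le_mono_l. unfold J; nia. }
  assert (HJ4 : 4 <= INR J) by (replace 4 with (INR 4) by (simpl; lra); apply le_INR; lia).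
  assert (Hn4 : 4 <= INR n) by (replace 4 with (INR 4) by (simpl; lra); apply le_INR; lia).
  apply le_INR in HnB. rewrite mult_INR, pow_INR, mult_INR in HnB.
  assert (Hln1 : 1 < ln (INR n)).
  { rewrite <- (ln_exp 1). apply ln_increasing. apply exp_pos. pose proof exp_le_3. lra. }
  assert (HlnJ : 0 < ln (INR J)).
  { rewrite <- ln_1. apply ln_increasing; lra. }
  assert (HlnJx : ln (INR J) <= INR J - 1) by (apply ln_le_xm1; lra).
  assert (Hlnn : ln (INR n) <= INR J * INR J * INR J - 1).
  { eapply Rle_trans. apply ln_le_mono; [lra|exact HnB].
    rewrite ln_mult, ln_pow, ln_mult; try (apply pow_lt); try nra.
    }
  assert (HL : ln (ln (INR n)) < 3 * ln (INR J)).
  { replace (3 * ln (INR J)) with (ln (INR J * INR J * INR J)).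
    apply ln_increasing; lra.
    rewrite !ln_mult; nra. }
  assert (HL0 : 0 < ln (ln (INR n))).
  { rewrite <- ln_1. apply ln_increasing; lra. }
  assert (HJJ : ln (INR J) <= ln (INR J + 1)) by (apply ln_le_mono; lra).
  set (L := ln (ln (INR n))) in *. set (s := INR (sigma_div n)) in *.
  set (m := INR n) in *. set (lj := ln (INR J)) in *.
  assert (Hs : m / INR q * lj <= s) by (eapply Rle_trans; [|exact Hsig];
    eapply Rle_trans; [|exact Hh]; apply Rmult_le_compat_l; [apply Rmult_le_pos; [lra| left; apply Rinv_0_lt_compat; lra]|lra]).
  apply Rle_ge. apply Rmult_le_reg_r with (m * L). nra.
  unfold Rdiv at 2. rewrite Rmult_assoc, Rinv_l, Rmult_1_r by nra.
  apply Rle_trans with (m / INR q * lj); auto.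
  unfold Rdiv. rewrite Rmult_1_l, Rinv_mult.
  assert (0 < / INR q) by (apply Rinv_0_lt_compat; lra).
  assert (m * L <= m * (3 * lj)) by nra.
  nra.
Qed.
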